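(* Let $Q=(q_1,\dots,q_n)$ with $q_i\in\mathbb C\setminus\{0,1\}$, and let $\Lambda=(\lambda_{ij})$ be an $n\times n$ matrix over $\mathbb C\setminus\{0\}$ with $\lambda_{ii}=1$, $\lambda_{ij}=\lambda_{ji}^{-1}$. Let $G(Q,\Lambda)$ be the multiplicative subgroup of $\mathbb C^\times$ generated by all $q_i$ and $\lambda_{ij}$, and assume it is torsion free, hence free abelian of finite rank $r$. Fix a basis $\eta_1,\dots,\eta_r$ of $G(Q,\Lambda)$, a $\mathbb Q$-linearly independent subset $\{\mu_1,\dots,\mu_r\}$ of $\mathbb C$, and $q\in\mathbb C\setminus\{0,1\}$ not a root of unity. For each $i$ let $e_i\in\mathbb C[t]$ be the unique polynomial of degree at most $2$ with $e_i(q)=\eta_i$, $e_i(1)=1$, $e_i'(1)=\mu_i$. Let $\mathbf K$ be the set of $\lambda\in\mathbb C\setminus\{0,1\}$ such that $e_i(\lambda)\ne0$ for all $i$ and the multiplicative subgroup $\langle e_1(\lambda),\dots,e_r(\lambda)\rangle$ of $\mathbb C^\times$ is free abelian with basis $e_1(\lambda),\dots,e_r(\lambda)$. Then $\mathbf K$ is an infinite subset of $\mathbb C\setminus\{0,1\}$ and $q\in\mathbf K$.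
   Context: $e_i'$ denotes the formal derivative of $e_i$. *)

(* Defs.v *)
From HB Require Import structures.
From mathcomp Require Import all_boot all_order all_algebra.
From mathcomp Require Import classical_sets cardinality reals.
From mathcomp Require Import complex.
Set Implicit Arguments. Unset Strict Implicit. Unset Printing Implicit Defensive.
Import Order.TTheory GRing.Theory Num.Theory.
Local Open Scope ring_scope.

Definition in_mgen (C : unitRingType) (I : finType) (g : I -> C) (x : C) : Prop :=
  exists z : I -> int, x = \prod_(i : I) g i ^ z i.

Definition mfree_basis (C : unitRingType) (r : nat) (v : 'I_r -> C) : Prop :=
  forall z : 'I_r -> int, \prod_(k < r) v k ^ z k = 1 -> forall k, z k = 0.

Definition QL_gen (C : Type) (n : nat) (Q : 'I_n -> C) (L : 'M[C]_n)
  (a : 'I_n + ('I_n * 'I_n)) : C :=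
  match a with inl i => Q i | inr ij => L ij.1 ij.2 end.

(* Main.v *)
Require Import Defs.
From HB Require Import structures.
From mathcomp Require Import all_boot all_order all_algebra.
From mathcomp Require Import classical_sets cardinality reals.
From mathcomp Require Import complex.
From mathcomp Require Import all_classical all_reals lebesgue_measure.
Import Order.TTheory GRing.Theory Num.Theory.
Local Open Scope ring_scope.
Local Open Scope classical_set_scope.

Lemma R_uncount (R : realType) : ~ countable [set: R].
Proof.
move=> c.
have := countable_lebesgue_measure0 (sub_countable (subset_card_le (@subsetT _ `[0%R, 1%R])) c).
rewrite lebesgue_measure_itv /= lte_fin ltr01 oppr0 adde0 => /eqP; rewrite eqe oner_eq0.
by [].
Qed.

Lemma C_uncount (R : realType) : ~ countable [set: R[i]].
Proof.
move=> /countable_injP [f finj]; apply: (@R_uncount R); apply/countable_injP.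
exists (fun x => f (x%:C)%C) => x y _ _ /finj.
by move=> /(_ (in_setT _) (in_setT _)) [].
Qed.

Lemma countableU2 T (A B : set T) : countable A -> countable B -> countable (A `|` B).
Proof.
move=> cA cB.
have -> : A `|` B = \bigcup_(b in [set: bool]) (if b then A else B).
  apply/seteqP; split=> x.
    by case=> h; [exists true | exists false].
  by case=> -[] _ h; [left|right].
apply: bigcup_countable => // -[] //.
Qed.

Lemma roots_finite (F : idomainType) (p : {poly F}) : p != 0 ->
  finite_set [set x | root p x].
Proof.
move=> p0; case: (pselect (finite_set [set x | root p x])) => // inf.
have [B BA cB] := infinite_set_fset (size p) inf.
have := max_poly_roots p0 (_ : all (root p) (finmap.enum_fset B)) (finmap.fset_uniq B).
have -> : (size (finmap.enum_fset B) < size p)%N = false by apply/negbTE; rewrite -leqNgt.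
move=> H; suff : false by []. apply: H.
by apply/allP => x xB; exact: BA.
Qed.

Definition pz (z : int) : nat := match z with Posz n => n | Negz _ => 0%N end.
Definition nz (z : int) : nat := match z with Posz _ => 0%N | Negz n => n.+1 end.

Lemma expz_split (F : fieldType) (x : F) z : x ^ z = x ^+ pz z / x ^+ nz z.
Proof.
case: z => n /=; first by rewrite expr0 invr1 mulr1.
by rewrite NegzE -exprnN mul1r.
Qed.

Lemma intr_split (F : pzRingType) z : (z%:~R : F) = (pz z)%:R - (nz z)%:R.
Proof. by case: z => n /=; rewrite ?subr0 // NegzE mulrNz sub0r. Qed.

Lemma deriv_prod1 (F : comNzRingType) (I : finType) (f : I -> {poly F}) (a : I -> nat) :
  (forall i, (f i).[1] = 1) ->
  (\prod_i f i ^+ a i).[1] = 1 /\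
  (\prod_i f i ^+ a i)^`().[1] = \sum_i (a i)%:R * (f i)^`().[1].
Proof.
move=> f1.
apply: (big_rec2 (fun p s => p.[1] = 1 /\ p^`().[1] = s)).
  by rewrite hornerC derivC hornerC.
move=> i p s _ [p1 ps]; split; first by rewrite hornerM horner_exp f1 expr1n p1 mulr1.
rewrite derivM deriv_exp !hornerE /= hornerMn hornerM horner_exp f1 expr1n p1 ps.
by rewrite !mulr1 ?mul1r -mulr_natl expr1n mul1r.
Qed.

Lemma prod_eval (F : fieldType) r (x : 'I_r -> F) (z : 'I_r -> int) :
  (forall k, x k != 0) -> \prod_(k < r) x k ^ z k = 1 ->
  \prod_(k < r) x k ^+ pz (z k) = \prod_(k < r) x k ^+ nz (z k).
Proof.
move=> x0.
under eq_bigr do rewrite expz_split.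
rewrite prodf_div => /(congr1 (fun t => t * \prod_(k < r) x k ^+ nz (z k))).
rewrite divfK ?mul1r //.
by apply/prodf_neq0 => k _; rewrite expf_neq0.
Qed.

Lemma PN_ne0 (F : fieldType) r (e : 'I_r -> {poly F}) (mu : 'I_r -> F) :
  (forall k, (e k).[1] = 1 /\ (e k)^`().[1] = mu k) ->
  (forall c : 'I_r -> rat, \sum_(k < r) ratr (c k) * mu k = 0 -> forall k, c k = 0) ->
  forall z : 'I_r -> int, (exists k, z k != 0) ->
  \prod_(k < r) e k ^+ pz (z k) - \prod_(k < r) e k ^+ nz (z k) != 0.
Proof.
move=> he hmu z [k zk]; apply/negP => /eqP H.
have h1 : forall k, (e k).[1] = 1 by move=> j; exact: (he j).1.
have := congr1 (fun p => p^`().[1]) H; rewrite /= derivB !hornerE deriv0 horner0.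
have [_ ->] := @deriv_prod1 _ _ e (fun j => pz (z j)) h1.
have [_ ->] := @deriv_prod1 _ _ e (fun j => nz (z j)) h1.
move=> S.
have : (z k)%:Q = 0.
  apply: (hmu (fun j => (z j)%:Q)); rewrite -[RHS]S -sumrB; apply: eq_bigr => j _.
  by rewrite ratr_int intr_split mulrBl (he j).2.
by move/eqP; rewrite intr_eq0 (negbTE zk).
Qed.

Theorem lemma2p5 (R : realType) (n : nat) (Q : 'I_n -> R[i]) (L : 'M[R[i]]_n)
  (r : nat) (eta : 'I_r -> R[i]) (mu : 'I_r -> R[i]) (q : R[i])
  (e : 'I_r -> {poly R[i]}) :
  (forall i, Q i != 0 /\ Q i != 1) ->
  (forall i j, L i j != 0) ->
  (forall i, L i i = 1) ->
  (forall i j, L i j = (L j i)^-1) ->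
  (* G(Q,Lambda) is torsion free *)
  (forall x, in_mgen (QL_gen Q L) x -> forall m : nat, (0 < m)%N -> x ^+ m = 1 -> x = 1) ->
  (* eta_1..eta_r is a basis of G(Q,Lambda) *)
  (forall k, in_mgen (QL_gen Q L) (eta k)) ->
  (forall x, in_mgen (QL_gen Q L) x -> in_mgen eta x) ->
  mfree_basis eta ->
  (* mu_1..mu_r are Q-linearly independent *)
  (forall c : 'I_r -> rat, \sum_(k < r) ratr (c k) * mu k = 0 -> forall k, c k = 0) ->
  q != 0 -> q != 1 -> (forall m : nat, (0 < m)%N -> q ^+ m != 1) ->
  (* e_i is the polynomial of degree <= 2 with the prescribed data *)
  (forall k, (size (e k) <= 3)%N /\ (e k).[q] = eta k /\ (e k).[1] = 1
             /\ (e k)^`().[1] = mu k) ->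
  let K : set R[i] := (fun lam : R[i] => lam != 0 /\ lam != 1 /\
            (forall k, (e k).[lam] != 0) /\ mfree_basis (fun k => (e k).[lam])) in
  infinite_set K /\ K q.
Proof.
move=> hQ hL hL1 hLinv htf hetaG hGeta hfree hmu q0 q1 qroot he K.
have he' : forall k, (e k).[1] = 1 /\ (e k)^`().[1] = mu k.
  by move=> k; have [_ [_ [? ?]]] := he k.
have eta0 : forall k, eta k != 0.
  move=> k; have [z ->] := hetaG k; apply/prodf_neq0 => a _; apply: expfz_neq0.
  by case: a => [j|[j j']] /=; [exact: (hQ j).1 | exact: hL].
split; last first.
  split=> //; split=> //; split.
    by move=> k; rewrite (he k).2.1.
  move=> z hz; apply: hfree; rewrite -[RHS]hz; apply: eq_bigr => k _.
  by rewrite (he k).2.1.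
move=> finK; apply: (@C_uncount R).
pose PN (z : 'I_r -> int) := \prod_(k < r) e k ^+ pz (z k) - \prod_(k < r) e k ^+ nz (z k).
pose Bad := \bigcup_(z in [set z : {ffun 'I_r -> int} | exists k, z k != 0])
              [set x | root (PN z) x].
have sub : [set: R[i]] `<=` K `|` [set 0] `|` [set 1]
    `|` \bigcup_(k in [set: 'I_r]) [set x | root (e k) x] `|` Bad.
  move=> x _.
  case: (pselect (K x)) => Kx; first by left; left; left; left.
  case: (eqVneq x 0) => [->|x0]; first by left; left; left; right.
  case: (eqVneq x 1) => [->|x1]; first by left; left; right.
  case: (pselect (exists k, root (e k) x)) => [[k rk]|nr].
    by left; right; exists k.
  right.
  have ex0 : forall k, (e k).[x] != 0.
    by move=> k; apply/negP => rk; apply: nr; exists k.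
  have nf : ~ mfree_basis (fun k => (e k).[x]).
    by move=> hf; apply: Kx.
  have [z nz1] : exists z : 'I_r -> int,
      ~ (\prod_(k < r) (e k).[x] ^ z k = 1 -> forall k, z k = 0).
    by apply/existsNP.
  have [hz1 nzk] := (not_implyP _ _).1 nz1.
  have [k zk] : exists k, z k != 0.
    by apply: contrapT => h; apply: nzk => k; apply/eqP; apply: contrapT => hk; apply: h; exists k; apply/negP.
  exists [ffun k => z k]; first by exists k; rewrite ffunE.
  rewrite /= /root /PN hornerD hornerN !horner_prod.
  under eq_bigr do rewrite ffunE horner_exp.
  under [X in _ - X]eq_bigr do rewrite ffunE horner_exp.

  by rewrite (@prod_eval _ _ _ z ex0 hz1) subrr.
apply: (sub_countable (subset_card_le sub)).
repeat apply: countableU2.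
- exact: finite_set_countable.
- exact: countable1.
- exact: countable1.
- apply: bigcup_countable => // k _; apply/finite_set_countable/roots_finite.
  by apply/negP => /eqP ek; have := (he' k).1; rewrite ek horner0 => /eqP; rewrite eq_sym oner_eq0.
- apply: bigcup_countable => // z [k zk]; apply/finite_set_countable/roots_finite.
  exact: (@PN_ne0 _ _ e mu he' hmu (fun k => z k) (ex_intro _ k zk)).
Qed.
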